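(* Let $n$ be a positive integer and suppose there exist two mutually orthogonal latin squares of order $n$ that have a common transversal. Let $\rho$ be an integer with $1 \le \rho \le n$. Then there exists a $(3n+\rho,4)$-packing with exactly $n\rho + D(\rho,4)$ blocks in which the largest partial parallel class has size $\rho$.
   Context: For integers $v \ge k \ge 2$, a $(v,k)$-packing is a pair $(X,\mathcal{B})$ where $X$ is a set of $v$ points and $\mathcal{B}$ is a set of $k$-subsets of $X$ (blocks) such that every pair of distinct points lies in at most one block. For integers $m \ge 0$, $D(m,k)$ denotes the maximum number of $k$-subsets of an $m$-set such that every pair of points lies in at most one of them (so $D(m,k)=0$ if $m<k$). A partial parallel class (PPC) is a set of pairwise disjoint blocks; its size is the number of blocks. ''The largest PPC has size $\rho$'' means the packing has a PPC of size $\rho$ but none of size $\rho+1$. A transversal of a latin square of order $n$ is a set of $n$ cells, one in each row and each column, containing $n$ distinct symbols; a common transversal of several latin squares is a set of cells that is a transversal of each of them. *)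

(* Defs.v *)
From mathcomp Require Import all_boot all_order.
Set Implicit Arguments. Unset Strict Implicit. Unset Printing Implicit Defensive.

Definition is_packing (v k : nat) (B : {set {set 'I_v}}) : Prop :=
  (forall b, b \in B -> #|b| = k) /\
  (forall x y : 'I_v, x != y ->
     #|[set b in B | (x \in b) && (y \in b)]| <= 1).

Definition D (m k : nat) : nat :=
  \max_(B : {set {set 'I_m}} | [forall b in B, #|b| == k] &&
        [forall x : 'I_m, forall y : 'I_m,
           (x != y) ==> (#|[set b in B | (x \in b) && (y \in b)]| <= 1)])
     #|B|.

Definition is_PPC (v : nat) (B P : {set {set 'I_v}}) : Prop :=
  P \subset B /\
  (forall b1 b2, b1 \in P -> b2 \in P -> b1 != b2 -> [disjoint b1 & b2]).

Definition largest_PPC_size (v : nat) (B : {set {set 'I_v}}) (rho : nat) : Prop :=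
  (exists P, is_PPC B P /\ #|P| = rho) /\
  (forall P, is_PPC B P -> #|P| <= rho).

Definition latin_square (n : nat) (L : 'I_n -> 'I_n -> 'I_n) : Prop :=
  (forall i, injective (L i)) /\ (forall j, injective (fun i => L i j)).

Definition orthogonal (n : nat) (L1 L2 : 'I_n -> 'I_n -> 'I_n) : Prop :=
  injective (fun c : 'I_n * 'I_n => (L1 c.1 c.2, L2 c.1 c.2)).

Definition ls_transversal (n : nat) (L : 'I_n -> 'I_n -> 'I_n) (T : {set 'I_n * 'I_n}) : Prop :=
  #|T| = n /\
  {in T &, injective (fun c : 'I_n * 'I_n => c.1)} /\
  {in T &, injective (fun c : 'I_n * 'I_n => c.2)} /\
  {in T &, injective (fun c : 'I_n * 'I_n => L c.1 c.2)}.

(* Main.v *)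
Require Import Defs.
From mathcomp Require Import all_boot all_order.
From mathcomp Require Import zify.
Set Implicit Arguments. Unset Strict Implicit. Unset Printing Implicit Defensive.

Lemma nat_pair (n i j a b i' j' a' b' x y : nat) :
  i < n -> j < n -> a < n -> b < n -> i' < n -> j' < n -> a' < n -> b' < n ->
  x <> y ->
  (x = i \/ x = n + j \/ x = 2*n + a \/ x = 3*n + b) ->
  (y = i \/ y = n + j \/ y = 2*n + a \/ y = 3*n + b) ->
  (x = i' \/ x = n + j' \/ x = 2*n + a' \/ x = 3*n + b') ->
  (y = i' \/ y = n + j' \/ y = 2*n + a' \/ y = 3*n + b') ->
  (i = i' /\ j = j') \/ (i = i' /\ a = a') \/ (i = i' /\ b = b') \/
  (j = j' /\ a = a') \/ (j = j' /\ b = b') \/ (a = a' /\ b = b').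
Proof.
move=> ? ? ? ? ? ? ? ? Hxy H1 H2 H3 H4.
case: H1 => [|[|[|]]] -> in Hxy H3 *; case: H2 => [|[|[|]]] -> in Hxy H4 *;
 (have {}Hxy : False by lia) || (case: H3 => [|[|[|]]] H3; try (exfalso; lia);
   case: H4 => [|[|[|]]] H4; try (exfalso; lia)).
all: lia.
Qed.

Lemma nat_one (n i j a b i' j' a' b' x : nat) :
  i < n -> j < n -> a < n -> b < n -> i' < n -> j' < n -> a' < n -> b' < n ->
  (x = i \/ x = n + j \/ x = 2*n + a \/ x = 3*n + b) ->
  (x = i' \/ x = n + j' \/ x = 2*n + a' \/ x = 3*n + b') ->
  i = i' \/ j = j' \/ a = a' \/ b = b'.
Proof.
move=> ? ? ? ? ? ? ? ? H1 H3.
case: H1 => [|[|[|]]] -> in H3 *; case: H3 => [|[|[|]]] H3; lia.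
Qed.

Definition emb N (x0 : 'I_N) (k : nat) : 'I_N := insubd x0 k.

Lemma val_emb N (x0 : 'I_N) k : k < N -> val (emb x0 k) = k.
Proof. by rewrite /emb val_insubd => ->. Qed.

Definition Ablk N (x0 : 'I_N) n (L1 L2 : 'I_n -> 'I_n -> 'I_n) (c : 'I_n * 'I_n)
  : {set 'I_N} :=
  emb x0 c.1 |: (emb x0 (n + c.2) |: (emb x0 (2*n + L1 c.1 c.2) |: [set emb x0 (3*n + L2 c.1 c.2)])).

Lemma memA N (x0 : 'I_N) n (L1 L2 : 'I_n -> 'I_n -> 'I_n) c x :
  3*n + L2 c.1 c.2 < N -> x \in Ablk x0 L1 L2 c ->
  (val x = c.1 \/ val x = n + c.2 \/ val x = 2*n + L1 c.1 c.2 \/ val x = 3*n + L2 c.1 c.2).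
Proof.
move=> H.
have := ltn_ord c.1; have := ltn_ord c.2; have := ltn_ord (L1 c.1 c.2).
move=> h1 h2 h3.
rewrite !inE -!val_eqE /= !val_emb; try lia.
Qed.

Lemma cardA N (x0 : 'I_N) n (L1 L2 : 'I_n -> 'I_n -> 'I_n) c :
  3*n + L2 c.1 c.2 < N -> #|Ablk x0 L1 L2 c| = 4.
Proof.
move=> H.
have := ltn_ord c.1; have := ltn_ord c.2; have := ltn_ord (L1 c.1 c.2).
move=> h1 h2 h3.
rewrite /Ablk !cardsU1 cards1 !inE -!val_eqE /= !val_emb; try lia.
Qed.

Lemma AA N (x0 : 'I_N) n (L1 L2 : 'I_n -> 'I_n -> 'I_n) c c' x y :
  latin_square L1 -> latin_square L2 -> orthogonal L1 L2 ->
  3*n + L2 c.1 c.2 < N -> 3*n + L2 c'.1 c'.2 < N -> x != y ->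
  x \in Ablk x0 L1 L2 c -> y \in Ablk x0 L1 L2 c ->
  x \in Ablk x0 L1 L2 c' -> y \in Ablk x0 L1 L2 c' -> c = c'.
Proof.
move=> [L1r L1c] [L2r L2c] Hort Hc Hc' Hxy.
move=> /(memA Hc) H1 /(memA Hc) H2 /(memA Hc') H3 /(memA Hc') H4.
have Hv : val x <> val y by move/val_inj=> e; rewrite e eqxx in Hxy.
have := nat_pair (ltn_ord c.1) (ltn_ord c.2) (ltn_ord (L1 c.1 c.2)) (ltn_ord (L2 c.1 c.2))
  (ltn_ord c'.1) (ltn_ord c'.2) (ltn_ord (L1 c'.1 c'.2)) (ltn_ord (L2 c'.1 c'.2)) Hv H1 H2 H3 H4.
case: c {Hc H1 H2 H3 H4} => i j; case: c' {Hc' } => i' j' /=.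
case=> [[/ord_inj e1 /ord_inj e2]|[[/ord_inj e1 /ord_inj e2]|[[/ord_inj e1 /ord_inj e2]|
  [[/ord_inj e1 /ord_inj e2]|[[/ord_inj e1 /ord_inj e2]|[/ord_inj e1 /ord_inj e2]]]]]].
- by rewrite e1 e2.
- by subst i'; rewrite (L1r _ _ _ e2).
- by subst i'; rewrite (L2r _ _ _ e2).
- by subst j'; rewrite (L1c _ _ _ e2).
- by subst j'; rewrite (L2c _ _ _ e2).
- by apply: Hort => /=; rewrite e1 e2.
Qed.

Lemma memA_hi N (x0 : 'I_N) n (L1 L2 : 'I_n -> 'I_n -> 'I_n) c x :
  3*n + L2 c.1 c.2 < N -> x \in Ablk x0 L1 L2 c -> 3*n <= val x ->
  val x = 3*n + L2 c.1 c.2.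
Proof.
move=> H /(memA H) Hx Hge.
have := ltn_ord c.1; have := ltn_ord c.2; have := ltn_ord (L1 c.1 c.2).
lia.
Qed.

Lemma lo_ne_hi n (i : 'I_n) k : nat_of_ord i = 3*n + k -> False.
Proof. have := ltn_ord i; lia. Qed.

Lemma emb12 N (x0 : 'I_N) n (i j : 'I_n) : 2*n <= N -> emb x0 i != emb x0 (n + j).
Proof.
move=> H; apply/eqP => /(congr1 val).
have hi := ltn_ord i; have hj := ltn_ord j.
rewrite !val_emb; lia.
Qed.

Lemma lt1 n rho (i : 'I_n) : nat_of_ord i < 3*n + rho.
Proof. have := ltn_ord i; lia. Qed.

Lemma cardS n rho (L2 : 'I_n -> 'I_n -> 'I_n) : latin_square L2 -> rho <= n ->
  #|[set c : 'I_n * 'I_n | L2 c.1 c.2 < rho]| = n * rho.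
Proof.
move=> [L2r _] Hrn.
pose phi := fun c : 'I_n * 'I_n => (c.1, L2 c.1 c.2).
have phiinj : injective phi.
  by move=> [i j] [i' j'] [e1 e2]; subst i'; rewrite (L2r _ _ _ e2).
pose W := [set s : 'I_n | s < rho].
have -> : [set c : 'I_n * 'I_n | L2 c.1 c.2 < rho] = phi @^-1: setX setT W.
  by apply/setP => c; rewrite !inE.
rewrite card_preimset // cardsX cardsT card_ord; congr (_ * _).
have -> : W = [set widen_ord Hrn k | k : 'I_rho].
  apply/setP => s; rewrite inE; apply/idP/imsetP => [Hs|[k _ ->]].
    by exists (Ordinal Hs) => //; apply: val_inj.
  exact: (ltn_ord k).
rewrite card_imset ?cardsT ?card_ord //.
by move=> k k' /(congr1 val) /= e; apply: val_inj.
Qed.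

Lemma cardW n rho (Hrn : rho <= n) : #|[set s : 'I_n | s < rho]| = rho.
Proof.
have -> : [set s : 'I_n | s < rho] = [set widen_ord Hrn k | k : 'I_rho].
  apply/setP => s; rewrite inE; apply/idP/imsetP => [Hs|[k _ ->]].
    by exists (Ordinal Hs) => //; apply: val_inj.
  exact: (ltn_ord k).
rewrite card_imset ?cardsT ?card_ord //.
by move=> k k' /(congr1 val) /= e; apply: val_inj.
Qed.

Theorem theorem2p4 (n rho : nat) :
  0 < n ->
  (exists L1 L2 : 'I_n -> 'I_n -> 'I_n,
      latin_square L1 /\ latin_square L2 /\ orthogonal L1 L2 /\
      exists T : {set 'I_n * 'I_n}, ls_transversal L1 T /\ ls_transversal L2 T) ->
  1 <= rho <= n ->
  exists B : {set {set 'I_(3 * n + rho)}},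
    is_packing 4 B /\ #|B| = n * rho + D rho 4 /\ largest_PPC_size B rho.
Proof.
move=> Hn [L1 [L2 [HL1 [HL2 [Hort [T [[HT1 [HTr [HTc HTs1]]] [_ [_ [_ HTs2]]]]]]]]]] /andP[Hr1 Hrn].
have H0 : 0 < 3*n + rho by lia.
pose x0 : 'I_(3*n+rho) := Ordinal H0.
pose A := Ablk x0 L1 L2.
pose y (k : 'I_rho) : 'I_(3*n+rho) := emb x0 (3*n + k).
have valy k : val (y k) = 3*n + k.
  rewrite val_emb //.
  by rewrite ltn_add2l.
have yinj : injective y.
  by move=> k k' /(congr1 val); rewrite !valy => e; apply: val_inj => /=; lia.
pose S := [set c : 'I_n * 'I_n | L2 c.1 c.2 < rho].
have HS c : c \in S -> 3*n + L2 c.1 c.2 < 3*n+rho by rewrite inE ltn_add2l.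
pose Pk := fun B0 : {set {set 'I_rho}} => [forall b in B0, #|b| == 4] &&
  [forall x : 'I_rho, forall y : 'I_rho,
     (x != y) ==> (#|[set b in B0 | (x \in b) && (y \in b)]| <= 1)].
have [B0 HB0 HD] : {B0 | B0 \in Pk & \max_(i in Pk) #|i| = #|B0|}.
  apply: eq_bigmax_cond; apply/card_gt0P; exists set0.
  rewrite unfold_in /Pk; apply/andP; split; apply/forallP => x.
    by rewrite inE.
  apply/forallP => z; apply/implyP => _.
  by rewrite (_ : [set b in set0 | _] = set0) ?cards0 //; apply/setP => b; rewrite !inE.
have HD' : D rho 4 = #|B0| by rewrite -HD.
move: HB0; rewrite unfold_in /Pk => /andP[/forallP Hsz /forallP Hpk].
pose BA := A @: S.
pose Ym := fun b : {set 'I_rho} => [set y k | k in b].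
pose BB := Ym @: B0.
have HS' c : c \in S -> L2 c.1 c.2 < rho by rewrite inE.
have yA c (Hc : c \in S) : y (Ordinal (HS' c Hc)) \in A c.
  by rewrite /A /Ablk !inE eqxx !orbT.
have embA1 (c : 'I_n * 'I_n) : emb x0 c.1 \in A c by rewrite /A /Ablk !inE eqxx.
have embA2 (c : 'I_n * 'I_n) : emb x0 (n + c.2) \in A c by rewrite /A /Ablk !inE eqxx !orbT.
have AY (c : 'I_n * 'I_n) b0 u v : c \in S -> u != v -> u \in A c -> v \in A c ->
    u \in Ym b0 -> v \in Ym b0 -> False.
  move=> Hc Huv uA vA /imsetP[k _ Eu] /imsetP[k' _ Ev]; subst u v.
  have h1 : 3*n <= val (y k) by rewrite valy leq_addr.
  have h2 : 3*n <= val (y k') by rewrite valy leq_addr.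
  have e1 := memA_hi (HS c Hc) uA h1.
  have e2 := memA_hi (HS c Hc) vA h2.
  by move/eqP: Huv; apply; apply: val_inj; rewrite e1 e2.
have Ainj : {in S &, injective A}.
  move=> c c' Hc Hc' e.
  apply: (AA HL1 HL2 Hort (HS _ Hc) (HS _ Hc') (emb12 x0 c.1 c.2 _) (embA1 c) (embA2 c)).
  - lia.
  - by move: (embA1 c); rewrite e; apply.
  - by move: (embA2 c); rewrite e; apply.
have disj : BA :&: BB = set0.
  apply/setP => b; rewrite !inE; apply/negP => /andP[/imsetP[c Hc ->] /imsetP[b0 _ E]].
  have : emb x0 c.1 \in Ym b0 by rewrite -E embA1.
  case/imsetP => k _ /(congr1 val); rewrite valy val_emb ?lt1 // => e.
  exact: lo_ne_hi e.
exists (BA :|: BB); split; [split|split].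
- move=> b; rewrite inE => /orP[/imsetP[c Hc ->]|/imsetP[b0 Hb0 ->]].
    exact: cardA (HS c Hc).
  by rewrite card_imset //; apply/eqP/(implyP (Hsz b0)).
- move=> u v Huv; apply/card_le1_eqP => b1 b2.
  rewrite !inE => /andP[Hb1 /andP[u1 v1]] /andP[Hb2 /andP[u2 v2]].
  case/orP: Hb1 => /imsetP[c1 Hc1 E1]; case/orP: Hb2 => /imsetP[c2 Hc2 E2]; subst b1 b2.
  + by rewrite (AA HL1 HL2 Hort (HS _ Hc1) (HS _ Hc2) Huv u1 v1 u2 v2).
  + by case: (AY c1 c2 u v Hc1 Huv u1 v1 u2 v2).
  + by case: (AY c2 c1 u v Hc2 Huv u2 v2 u1 v1).
  + move: u1 v1 u2 v2 => /imsetP[k1 k1in E1] /imsetP[k2 k2in E2].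
    subst u v => /imsetP[k1' k1in' /yinj e1] /imsetP[k2' k2in' /yinj e2]; subst k1' k2'.
    have Hk : k1 != k2 by apply: contraNneq Huv => ->.
    have /card_le1_eqP H := implyP (forallP (Hpk k1) k2) Hk.
    rewrite (H c1 c2) //; rewrite !inE; apply/andP; split => //; apply/andP; split => //.
- rewrite cardsU disj cards0 subn0 card_in_imset // card_imset; last exact: imset_inj.
  by rewrite HD' cardS.
- split.
  + exists (A @: (T :&: S)); split.
    * split.
      -- apply/subsetP => b /imsetP[c /setIP[_ Hc] ->]; rewrite inE; apply/orP; left.
         exact: imset_f.
      -- move=> b1 b2 /imsetP[c1 /setIP[T1 S1] ->] /imsetP[c2 /setIP[T2 S2] ->] Hne.
         have Hc : c1 != c2 by apply: contraNneq Hne => ->.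
         rewrite -setI_eq0; apply/eqP/setP => x; rewrite in_setI in_set0; apply/negP => /andP[x1 x2].
         have := nat_one (ltn_ord c1.1) (ltn_ord c1.2) (ltn_ord (L1 c1.1 c1.2))
           (ltn_ord (L2 c1.1 c1.2)) (ltn_ord c2.1) (ltn_ord c2.2) (ltn_ord (L1 c2.1 c2.2))
           (ltn_ord (L2 c2.1 c2.2)) (memA (HS _ S1) x1) (memA (HS _ S2) x2).
         case=> [/ord_inj e|[/ord_inj e|[/ord_inj e|/ord_inj e]]]; move/eqP: Hc; apply.
         ++ exact: HTr.
         ++ exact: HTc.
         ++ exact: HTs1.
         ++ exact: HTs2.
    * rewrite card_in_imset; last by move=> c c' /setIP[_ Hc] /setIP[_ Hc']; apply: Ainj.
      pose g := fun c : 'I_n * 'I_n => L2 c.1 c.2.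
      have gT : g @: T = setT.
        apply/eqP; rewrite eqEcard subsetT /= cardsT card_ord.
        by rewrite (card_in_imset (f:=g) (D:=T) HTs2) HT1.
      rewrite -(card_in_imset (f:=g) (D:=T :&: S)); last by move=> c c' /setIP[Hc _] /setIP[Hc' _]; apply: HTs2.
      have -> : g @: (T :&: S) = [set s : 'I_n | s < rho].
        apply/setP => s; rewrite inE; apply/imsetP/idP => [[c /setIP[_ Hc] ->]|Hs].
          exact: HS' c Hc.
        have : s \in g @: T by rewrite gT inE.
        case/imsetP => c Hc E; exists c => //; rewrite !inE Hc /=.
        by rewrite E in Hs.
      exact: cardW.
  + move=> P [/subsetP HPB HPd].
    pose k0 : 'I_rho := Ordinal Hr1.
    pose f := fun b : {set 'I_(3*n+rho)} => odflt k0 [pick k | y k \in b].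
    have Yin b : b \in BA :|: BB -> exists k, y k \in b.
      rewrite inE => /orP[/imsetP[c Hc ->]|/imsetP[b0 Hb0 ->]].
        by exists (Ordinal (HS' c Hc)); exact: yA.
      have : #|b0| = 4 by apply/eqP/(implyP (Hsz b0)).
      case: (set_0Vmem b0) => [->|[k Hk]]; first by rewrite cards0.
      by exists k; apply: imset_f.
    have Hf b : b \in BA :|: BB -> y (f b) \in b.
      move=> Hb; rewrite /f; case: pickP => [k Hk|H] //=.
      by case: (Yin b Hb) => k Hk; rewrite H in Hk.
    apply: (leq_trans _ (eq_leq (card_ord rho))); apply: (@leq_card_in _ _ f) => b1 b2 H1 H2 e.
    case: (b1 =P b2) => // ne; exfalso.
    have := disjointFr (HPd b1 b2 H1 H2 (introN eqP ne)) (Hf _ (HPB _ H1)).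
    by rewrite e (Hf _ (HPB _ H2)).
Qed.
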